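(* Let $S$ be a self-adjoint subspace in $X^2$ and $A$ a closed Hermitian subspace in $X^2$ with $D(S)\subset D(A)$. If $A_s$ is $S_s$-compact, then $S+A$ is a self-adjoint subspace in $X^2$.
   Context: $X$ is a complex Hilbert space and $X^2=X\times X$ carries the inner product $\langle (x,f),(y,g)\rangle=\langle x,y\rangle+\langle f,g\rangle$. A subspace $T$ in $X^2$ means a linear subspace of $X^2$ (a linear relation); a linear operator in $X$ is identified with its graph. Notation: $D(T)=\{x:(x,f)\in T \text{ for some } f\}$, $T(x)=\{f:(x,f)\in T\}$. The adjoint is $T^*=\{(y,g)\in X^2:\langle g,x\rangle=\langle y,f\rangle \text{ for all }(x,f)\in T\}$; $T$ is Hermitian if $T\subset T^*$ and self-adjoint if $T=T^*$. For subspaces $S,A$ in $X^2$, $S+A=\{(x,f+g):(x,f)\in S,(x,g)\in A\}$. For a closed subspace $T$, set $T_\infty=\{(0,g)\in X^2:(0,g)\in T\}$ and $T_s=T\ominus T_\infty$ (orthogonal complement of $T_\infty$ in $T$), so $T=T_s\oplus T_\infty$; $T_s$ is the graph of a linear operator (the operator part of $T$) with $D(T_s)=D(T)$ and $R(T_s)\subset T(0)^\perp$. For linear operators $U,V$ in $X$ with $D(V)\subset D(U)$: $U$ is $V$-compact if $U|_{D(V)}$ is compact as a map from $(D(V),\|\cdot\|_V)$ into $X$, where $\|x\|_V=\|x\|+\|Vx\|$. *)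

(* Defs.v *)
From Stdlib Require Import Reals.
Open Scope R_scope.

Record Cpx : Type := mkCpx { Re : R ; Im : R }.
Definition C0 : Cpx := mkCpx 0 0.
Definition C1 : Cpx := mkCpx 1 0.
Definition Cadd (a b : Cpx) : Cpx := mkCpx (Re a + Re b) (Im a + Im b).
Definition Cmul (a b : Cpx) : Cpx :=
  mkCpx (Re a * Re b - Im a * Im b) (Re a * Im b + Im a * Re b).
Definition Cconj (a : Cpx) : Cpx := mkCpx (Re a) (- Im a).

Record HilbertSpace : Type := {
  carrier :> Type;
  hzero : carrier;
  hadd : carrier -> carrier -> carrier;
  hopp : carrier -> carrier;
  hscal : Cpx -> carrier -> carrier;
  ip : carrier -> carrier -> Cpx;
  hadd_assoc : forall x y z, hadd x (hadd y z) = hadd (hadd x y) z;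
  hadd_comm : forall x y, hadd x y = hadd y x;
  hadd_0 : forall x, hadd x hzero = x;
  hadd_opp : forall x, hadd x (hopp x) = hzero;
  hscal_1 : forall x, hscal C1 x = x;
  hscal_assoc : forall a b x, hscal a (hscal b x) = hscal (Cmul a b) x;
  hscal_distr_l : forall a x y, hscal a (hadd x y) = hadd (hscal a x) (hscal a y);
  hscal_distr_r : forall a b x, hscal (Cadd a b) x = hadd (hscal a x) (hscal b x);
  ip_add_l : forall x y z, ip (hadd x y) z = Cadd (ip x z) (ip y z);
  ip_scal_l : forall a x y, ip (hscal a x) y = Cmul a (ip x y);
  ip_conj : forall x y, ip y x = Cconj (ip x y);
  ip_pos : forall x, 0 <= Re (ip x x);
  ip_def : forall x, ip x x = C0 -> x = hzero;
  hcomplete : forall u : nat -> carrier,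
    (forall eps, eps > 0 -> exists N, forall n m, (n >= N)%nat -> (m >= N)%nat ->
        sqrt (Re (ip (hadd (u n) (hopp (u m))) (hadd (u n) (hopp (u m))))) < eps) ->
    exists l, forall eps, eps > 0 -> exists N, forall n, (n >= N)%nat ->
        sqrt (Re (ip (hadd (u n) (hopp l)) (hadd (u n) (hopp l)))) < eps
}.

Arguments hzero {h}.
Arguments hadd {h}.
Arguments hopp {h}.
Arguments hscal {h}.
Arguments ip {h}.

Section Relations.
Variable X : HilbertSpace.

Definition hnorm (x : X) : R := sqrt (Re (ip x x)).
Definition hsub (x y : X) : X := hadd x (hopp y).

Definition ip2 (p q : X * X) : Cpx := Cadd (ip (fst p) (fst q)) (ip (snd p) (snd q)).
Definition norm2 (p : X * X) : R := sqrt (Re (ip2 p p)).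

(** A subspace T in X^2 (a linear relation) is a predicate on X * X *)
Definition is_linear_subspace (T : X * X -> Prop) : Prop :=
  T (hzero, hzero) /\
  (forall p q, T p -> T q -> T (hadd (fst p) (fst q), hadd (snd p) (snd q))) /\
  (forall (a : Cpx) p, T p -> T (hscal a (fst p), hscal a (snd p))).

Definition is_closed2 (T : X * X -> Prop) : Prop :=
  forall (u : nat -> X * X) (l : X * X),
    (forall n, T (u n)) ->
    (forall eps, eps > 0 -> exists N, forall n, (n >= N)%nat ->
        norm2 (hsub (fst (u n)) (fst l), hsub (snd (u n)) (snd l)) < eps) ->
    T l.

Definition dom (T : X * X -> Prop) (x : X) : Prop := exists f, T (x, f).

Definition adjoint (T : X * X -> Prop) : X * X -> Prop :=
  fun q => forall p, T p -> ip (snd q) (fst p) = ip (fst q) (snd p).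

Definition hermitian (T : X * X -> Prop) : Prop := forall p, T p -> adjoint T p.

Definition self_adjoint (T : X * X -> Prop) : Prop := forall p, T p <-> adjoint T p.

Definition rel_sum (S A : X * X -> Prop) : X * X -> Prop :=
  fun p => exists f g, S (fst p, f) /\ A (fst p, g) /\ snd p = hadd f g.

Definition T_inf (T : X * X -> Prop) : X * X -> Prop :=
  fun p => fst p = hzero /\ T p.

Definition T_s (T : X * X -> Prop) : X * X -> Prop :=
  fun p => T p /\ forall q, T_inf T q -> ip2 p q = C0.

(** For operators U, V (given by their graphs) with D(V) ⊂ D(U):
    U is V-compact iff U restricted to (D(V), ||.||_V) is compact into X,
    i.e. every ||.||_V-bounded sequence in D(V) is mapped by U to a
    sequence having a convergent subsequence in X. *)
Definition rel_compact (U V : X * X -> Prop) : Prop :=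
  forall (x v u : nat -> X) (M : R),
    (forall n, V (x n, v n)) ->
    (forall n, U (x n, u n)) ->
    (forall n, hnorm (x n) + hnorm (v n) <= M) ->
    exists (phi : nat -> nat) (y : X),
      (forall n, (phi n < phi (S n))%nat) /\
      (forall eps, eps > 0 -> exists N, forall n, (n >= N)%nat ->
          hnorm (hsub (u (phi n)) y) < eps).

End Relations.

Arguments hnorm {X}.
Arguments hsub {X}.
Arguments ip2 {X}.
Arguments norm2 {X}.
Arguments is_linear_subspace {X}.
Arguments is_closed2 {X}.
Arguments dom {X}.
Arguments adjoint {X}.
Arguments hermitian {X}.
Arguments self_adjoint {X}.
Arguments rel_sum {X}.
Arguments T_inf {X}.
Arguments T_s {X}.
Arguments rel_compact {X}.

(* Main.v *)
Require Import Defs.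
From Stdlib Require Import Reals Lra Lia ClassicalEpsilon Classical FunctionalExtensionality.
Open Scope R_scope.
Set Implicit Arguments.

Lemma Cpx_ext (a b : Cpx) : Re a = Re b -> Im a = Im b -> a = b.
Proof. destruct a, b; simpl; intros; subst; reflexivity. Qed.

Ltac cpx := apply Cpx_ext; simpl; ring.

Section H.
Context {X : HilbertSpace}.
Implicit Types x y z u v w : X.

Lemma hadd_0l (x : X) : hadd hzero x = x.
Proof. rewrite hadd_comm; apply hadd_0. Qed.

Lemma hadd_opp_l (x : X) : hadd (hopp x) x = hzero.
Proof. rewrite hadd_comm; apply hadd_opp. Qed.

Lemma hadd_cancel (x y z : X) : hadd x y = hadd x z -> y = z.
Proof.
  intro H. rewrite <- (hadd_0l y), <- (hadd_0l z), <- (hadd_opp_l x).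
  rewrite <- !hadd_assoc, H. reflexivity.
Qed.

Lemma hopp_unique (x y : X) : hadd x y = hzero -> y = hopp x.
Proof. intro H; apply (hadd_cancel x); rewrite H, hadd_opp; reflexivity. Qed.

Lemma hscal_0 (x : X) : hscal C0 x = hzero.
Proof.
  apply (hadd_cancel (hscal C0 x)). rewrite hadd_0, <- hscal_distr_r.
  f_equal. cpx.
Qed.

Definition Cm1 := mkCpx (-1) 0.

Lemma hscal_m1 (x : X) : hscal Cm1 x = hopp x.
Proof.
  apply hopp_unique. rewrite <- (hscal_1 _ x) at 1. rewrite <- hscal_distr_r.
  rewrite <- (hscal_0 x). f_equal. cpx.
Qed.

Lemma hscal_zero (a : Cpx) : hscal a (@hzero X) = hzero.
Proof.
  rewrite <- (hscal_0 hzero), hscal_assoc. f_equal. cpx.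
Qed.

Lemma hopp_hadd (x y : X) : hopp (hadd x y) = hadd (hopp x) (hopp y).
Proof. rewrite <- !hscal_m1, hscal_distr_l; reflexivity. Qed.

Lemma hopp_opp (x : X) : hopp (hopp x) = x.
Proof. rewrite <- !hscal_m1, hscal_assoc. rewrite <- (hscal_1 _ x) at 2. f_equal. cpx. Qed.

Lemma hopp_zero : hopp (@hzero X) = hzero.
Proof. rewrite <- hscal_m1; apply hscal_zero. Qed.

Lemma hadd_perm4 (a b c d : X) : hadd (hadd a b) (hadd c d) = hadd (hadd a c) (hadd b d).
Proof.
  rewrite !hadd_assoc. f_equal. rewrite <- !hadd_assoc. f_equal. apply hadd_comm.
Qed.

Lemma hsub_add (a b c d : X) : hsub (hadd a b) (hadd c d) = hadd (hsub a c) (hsub b d).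
Proof. unfold hsub. rewrite hopp_hadd, hadd_perm4. reflexivity. Qed.

Lemma hsub_chain (a u b : X) : hadd (hsub a u) (hsub u b) = hsub a b.
Proof.
  unfold hsub. rewrite hadd_perm4, hadd_assoc, <- (hadd_assoc _ a u), hadd_opp, hadd_0. reflexivity.
Qed.

Lemma hsub_scal (a : Cpx) (x y : X) : hsub (hscal a x) (hscal a y) = hscal a (hsub x y).
Proof.
  unfold hsub. rewrite hscal_distr_l, <- !hscal_m1, !hscal_assoc. do 2 f_equal. cpx.
Qed.

Lemma hsub_diag (x : X) : hsub x x = hzero.
Proof. apply hadd_opp. Qed.

Lemma hsub_0 (x : X) : hsub x hzero = x.
Proof. unfold hsub; rewrite hopp_zero; apply hadd_0. Qed.

Lemma hsub_opp (x y : X) : hopp (hsub x y) = hsub y x.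
Proof. unfold hsub. rewrite hopp_hadd, hopp_opp, hadd_comm; reflexivity. Qed.

Lemma hsub_add_cancel (x y : X) : hadd (hsub x y) y = x.
Proof. unfold hsub. rewrite <- hadd_assoc, hadd_opp_l, hadd_0; reflexivity. Qed.

Lemma ip_zero_l (y : X) : ip hzero y = C0.
Proof. rewrite <- (hscal_0 hzero), ip_scal_l. cpx. Qed.

Lemma ip_zero_r (y : X) : ip y hzero = C0.
Proof. rewrite ip_conj, ip_zero_l. cpx. Qed.

Lemma ip_add_r (x y z : X) : ip x (hadd y z) = Cadd (ip x y) (ip x z).
Proof. rewrite ip_conj, ip_add_l, (ip_conj _ y x), (ip_conj _ z x). cpx. Qed.

Lemma ip_scal_r (a : Cpx) (x y : X) : ip x (hscal a y) = Cmul (Cconj a) (ip x y).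
Proof. rewrite ip_conj, ip_scal_l, (ip_conj _ y x). cpx. Qed.

Lemma ip_opp_l (x y : X) : ip (hopp x) y = Cmul Cm1 (ip x y).
Proof. rewrite <- hscal_m1, ip_scal_l; reflexivity. Qed.

Lemma ip_opp_r (x y : X) : ip x (hopp y) = Cmul Cm1 (ip x y).
Proof. rewrite <- hscal_m1, ip_scal_r. f_equal. cpx. Qed.

Lemma ip_sub_l (x y z : X) : ip (hsub x y) z = Cadd (ip x z) (Cmul Cm1 (ip y z)).
Proof. unfold hsub; rewrite ip_add_l, ip_opp_l; reflexivity. Qed.

Lemma ip_sub_r (x y z : X) : ip z (hsub x y) = Cadd (ip z x) (Cmul Cm1 (ip z y)).
Proof. unfold hsub; rewrite ip_add_r, ip_opp_r; reflexivity. Qed.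

Lemma Im_ip_self (x : X) : Im (ip x x) = 0.
Proof. pose proof (ip_conj _ x x) as H. destruct (ip x x) as [a b]; simpl in *.
  injection H; lra. Qed.

Definition Nq (x : X) := Re (ip x x).
Definition rp (x y : X) := Re (ip x y).

Lemma N_nonneg x : 0 <= Nq x.
Proof. apply ip_pos. Qed.

Lemma N_zero x : Nq x = 0 -> x = hzero.
Proof. intro H. apply ip_def. apply Cpx_ext; [exact H| apply Im_ip_self]. Qed.

Lemma r_sym x y : rp x y = rp y x.
Proof. unfold rp. rewrite (ip_conj _ x y). reflexivity. Qed.

Lemma N_lin x y (a : R) : Nq (hadd x (hscal (mkCpx a 0) y)) = Nq x + 2 * a * rp x y + a * a * Nq y.
Proof.
  unfold Nq, rp. rewrite ip_add_l, !ip_add_r, !ip_scal_l, !ip_scal_r, (ip_conj _ y x). simpl. ring.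
Qed.

Lemma N_add x y : Nq (hadd x y) = Nq x + Nq y + 2 * rp x y.
Proof.
  unfold Nq, rp. rewrite ip_add_l, !ip_add_r, (ip_conj _ y x). simpl. ring.
Qed.

Lemma N_scal (a : Cpx) x : Nq (hscal a x) = (Re a * Re a + Im a * Im a) * Nq x.
Proof.
  unfold Nq. rewrite ip_scal_l, ip_scal_r. pose proof (Im_ip_self x).
  destruct a as [p q]; destruct (ip x x) as [u v]; simpl in *. subst. ring.
Qed.

Lemma N_opp x : Nq (hopp x) = Nq x.
Proof. rewrite <- hscal_m1, N_scal. simpl. ring. Qed.

Lemma N_sub_sym x y : Nq (hsub x y) = Nq (hsub y x).
Proof. rewrite <- hsub_opp, N_opp. reflexivity. Qed.

Lemma CS2 x y : rp x y * rp x y <= Nq x * Nq y.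
Proof.
  destruct (Req_dec (Nq y) 0) as [E|E].
  - apply N_zero in E; subst. unfold rp, Nq; rewrite !ip_zero_r; simpl. lra.
  - pose proof (N_nonneg y). set (a := - rp x y / Nq y).
    pose proof (N_nonneg (hadd x (hscal (mkCpx a 0) y))) as H0.
    rewrite N_lin in H0. unfold a in H0.
    assert (H1 : Nq x + 2 * (- rp x y / Nq y) * rp x y + - rp x y / Nq y * (- rp x y / Nq y) * Nq y
      = Nq x - rp x y * rp x y / Nq y) by (field; lra).
    rewrite H1 in H0.
    assert (0 < Nq y) by lra.
    assert (rp x y * rp x y / Nq y <= Nq x) by lra.
    apply (Rmult_le_compat_r (Nq y)) in H3; [|lra].
    unfold Rdiv in H3. rewrite Rmult_assoc, Rinv_l in H3 by lra. lra.
Qed.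

Lemma hnorm_N x : hnorm x = sqrt (Nq x).
Proof. reflexivity. Qed.

Lemma hnorm_nonneg x : 0 <= hnorm x.
Proof. apply sqrt_pos. Qed.

Lemma hnorm_sq x : hnorm x * hnorm x = Nq x.
Proof. apply sqrt_sqrt, N_nonneg. Qed.

Lemma CS x y : Rabs (rp x y) <= hnorm x * hnorm y.
Proof.
  rewrite !hnorm_N, <- sqrt_mult by apply N_nonneg.
  rewrite <- sqrt_Rsqr_abs. apply sqrt_le_1_alt. unfold Rsqr. apply CS2.
Qed.

Lemma r_le x y : rp x y <= hnorm x * hnorm y.
Proof. pose proof (CS x y). pose proof (Rle_abs (rp x y)). lra. Qed.

Lemma hnorm_tri x y : hnorm (hadd x y) <= hnorm x + hnorm y.
Proof.
  rewrite (hnorm_N (hadd x y)). rewrite <- (sqrt_square (hnorm x + hnorm y))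
    by (pose proof (hnorm_nonneg x); pose proof (hnorm_nonneg y); lra).
  apply sqrt_le_1_alt. rewrite N_add.
  pose proof (r_le x y). pose proof (hnorm_sq x). pose proof (hnorm_sq y). nra.
Qed.

Lemma hnorm_scal a x : hnorm (hscal a x) = sqrt (Re a * Re a + Im a * Im a) * hnorm x.
Proof. rewrite !hnorm_N, N_scal, sqrt_mult; [reflexivity| nra | apply N_nonneg]. Qed.

Lemma hnorm_scalR a x : hnorm (hscal (mkCpx a 0) x) = Rabs a * hnorm x.
Proof. rewrite hnorm_scal; simpl. f_equal. rewrite <- sqrt_Rsqr_abs. unfold Rsqr. f_equal; ring. Qed.

Lemma hnorm_sub_sym x y : hnorm (hsub x y) = hnorm (hsub y x).
Proof. rewrite !hnorm_N, N_sub_sym. reflexivity. Qed.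

Lemma hnorm_zero x : hnorm x = 0 -> x = hzero.
Proof. intro H. apply N_zero. rewrite <- hnorm_sq, H. ring. Qed.

Lemma hnorm_of_zero : hnorm (@hzero X) = 0.
Proof. rewrite hnorm_N. unfold Nq. rewrite ip_zero_l. simpl. apply sqrt_0. Qed.

Lemma hnorm_sub_tri (a u b : X) : hnorm (hsub a b) <= hnorm (hsub a u) + hnorm (hsub u b).
Proof. rewrite <- (hsub_chain a u b) at 1. apply hnorm_tri. Qed.

Lemma hnorm_sq_le (a : X) b : 0 <= b -> Nq a <= b * b -> hnorm a <= b.
Proof. intros. rewrite hnorm_N, <- (sqrt_square b) by lra. apply sqrt_le_1_alt. lra. Qed.

End H.


Arguments Cm1 : clear implicits.

Lemma choice_fun (T A : Type) (P : T -> A -> Prop) :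
  (forall t, exists a, P t a) -> exists f : T -> A, forall t, P t (f t).
Proof.
  intro H. exists (fun t => proj1_sig (constructive_indefinite_description _ (H t))).
  intro t. exact (proj2_sig (constructive_indefinite_description _ (H t))).
Qed.

Lemma small_le (a b K : R) : 0 < K -> (forall d, 0 < d <= 1 -> a <= b + K * d) -> a <= b.
Proof.
  intros HK H. destruct (Rle_dec a b) as [|n]; [assumption|].
  exfalso. set (d := Rmin 1 ((a - b) / (2 * K))).
  assert (0 < (a - b) / (2*K)) by (apply Rdiv_lt_0_compat; lra).
  assert (Hd : 0 < d <= 1) by (unfold d; split; [apply Rmin_glb_lt; lra| apply Rmin_l]).
  specialize (H d Hd). assert (d <= (a-b)/(2*K)) by apply Rmin_r.
  apply (Rmult_le_compat_l K) in H1; [|lra].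
  replace (K * ((a - b) / (2 * K))) with ((a-b)/2) in H1 by (field; lra). lra.
Qed.

Lemma inv_small (d : R) : 0 < d -> exists K : nat, forall n, (n >= K)%nat -> / (INR n + 1) < d.
Proof.
  intro Hd. destruct (INR_unbounded (/ d)) as [K HK]. exists K. intros n Hn.
  apply le_INR in Hn. assert (0 < / d) by (apply Rinv_0_lt_compat; lra).
  rewrite <- (Rinv_inv d). apply Rinv_lt_contravar.
  - apply Rmult_lt_0_compat; lra.
  - lra.
Qed.

Section H2.
Context {X : HilbertSpace}.
Implicit Types x y z u v w : X.

Definition conv (s : nat -> X) (l : X) := forall eps, eps > 0 -> exists K, forall n, (n >= K)%nat ->
  hnorm (hsub (s n) l) < eps.
Definition cauchy (s : nat -> X) := forall eps, eps > 0 -> exists K, forall n m, (n >= K)%nat -> (m >= K)%nat ->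
  hnorm (hsub (s n) (s m)) < eps.

Lemma cauchy_conv s : cauchy s -> exists l, conv s l.
Proof. intro H. apply (hcomplete X s H). Qed.

Lemma conv_unique s (a b : X) : conv s a -> conv s b -> a = b.
Proof.
  intros Ha Hb. apply (hadd_cancel (hopp b)). rewrite hadd_opp_l.
  rewrite hadd_comm. change (hsub a b = hzero). apply hnorm_zero.
  apply Rle_antisym; [|apply hnorm_nonneg].
  apply small_le with (K:=2); [lra|]. intros d Hd.
  destruct (Ha d) as [K1 H1]; [lra|]. destruct (Hb d) as [K2 H2]; [lra|].
  specialize (H1 (K1+K2)%nat ltac:(lia)). specialize (H2 (K1+K2)%nat ltac:(lia)).
  pose proof (hnorm_sub_tri a (s (K1+K2)%nat) b) as HT. rewrite (hnorm_sub_sym a (s (K1+K2)%nat)) in HT. lra.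
Qed.

Lemma conv_add s t (a b : X) : conv s a -> conv t b -> conv (fun n => hadd (s n) (t n)) (hadd a b).
Proof.
  intros Ha Hb eps He. destruct (Ha (eps/2)) as [K1 H1]; [lra|]. destruct (Hb (eps/2)) as [K2 H2]; [lra|].
  exists (K1+K2)%nat. intros n Hn. rewrite hsub_add.
  pose proof (hnorm_tri (hsub (s n) a) (hsub (t n) b)).
  specialize (H1 n ltac:(lia)). specialize (H2 n ltac:(lia)). lra.
Qed.

Lemma conv_scal s (a : X) c : conv s a -> conv (fun n => hscal c (s n)) (hscal c a).
Proof.
  intros Ha eps He. set (k := sqrt (Re c * Re c + Im c * Im c)).
  assert (0 <= k) by apply sqrt_pos.
  destruct (Ha (eps / (k+1))) as [K H1]. { apply Rdiv_lt_0_compat; lra. }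
  exists K. intros n Hn. rewrite hsub_scal, hnorm_scal. fold k.
  specialize (H1 n Hn). pose proof (hnorm_nonneg (hsub (s n) a)).
  apply (Rmult_lt_compat_l (k+1)) in H1; [|lra].
  replace ((k+1) * (eps / (k+1))) with eps in H1 by (field; lra). nra.
Qed.

Lemma conv_const (a : X) : conv (fun _ => a) a.
Proof. intros eps He. exists O. intros. rewrite hsub_diag, hnorm_of_zero. lra. Qed.

Lemma conv_sub s t (a b : X) : conv s a -> conv t b -> conv (fun n => hsub (s n) (t n)) (hsub a b).
Proof.
  intros Hs Ht. pose proof (conv_add Hs (conv_scal Cm1 Ht)) as H.
  intros eps He; destruct (H eps He) as [K HK]; exists K; intros n Hn; specialize (HK n Hn).
  rewrite !hscal_m1 in HK. exact HK.
Qed.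

Lemma conv_sub0 s (a : X) : conv s a -> conv (fun n => hsub (s n) a) hzero.
Proof. intros H eps He. destruct (H eps He) as [K HK]. exists K. intros. rewrite hsub_0. auto. Qed.

Lemma conv_subseq s (a : X) (phi : nat -> nat) : (forall n, (phi n < phi (S n))%nat) -> conv s a ->
  conv (fun n => s (phi n)) a.
Proof.
  intros Hp H eps He. destruct (H eps He) as [K HK]. exists K. intros n Hn. apply HK.
  assert (forall n, (n <= phi n)%nat). { induction n0; [lia|]. specialize (Hp n0). lia. }
  specialize (H0 n). lia.
Qed.

Lemma r_sub_l x y z : rp (hsub x y) z = rp x z - rp y z.
Proof. unfold rp. rewrite ip_sub_l. simpl. ring. Qed.

Lemma r_add_l x y z : rp (hadd x y) z = rp x z + rp y z.
Proof. unfold rp. rewrite ip_add_l. simpl. ring. Qed.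

Lemma conv_r_lim s (a : X) y (c : R) : conv s a -> (forall n, rp (s n) y = c) -> rp a y = c.
Proof.
  intros H Hc. apply Rle_antisym.
  - apply small_le with (K := hnorm y + 1); [pose proof (hnorm_nonneg y); lra|].
    intros d Hd. destruct (H d) as [K HK]; [lra|]. specialize (HK K (le_n _)).
    pose proof (r_le (hsub a (s K)) y). rewrite r_sub_l, Hc in H0. rewrite hnorm_sub_sym in H0.
    pose proof (hnorm_nonneg y). pose proof (hnorm_nonneg (hsub (s K) a)). nra.
  - apply Rge_le, Rminus_ge, Rle_ge. 
    apply small_le with (K := hnorm y + 1); [pose proof (hnorm_nonneg y); lra|].
    intros d Hd. destruct (H d) as [K HK]; [lra|]. specialize (HK K (le_n _)).
    pose proof (r_le (hsub (s K) a) y). rewrite r_sub_l, Hc in H0.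
    pose proof (hnorm_nonneg y). pose proof (hnorm_nonneg (hsub (s K) a)). nra.
Qed.

Lemma ip_eq_r (a b c d : X) : rp a b = rp c d -> rp a (hscal (mkCpx 0 1) b) = rp c (hscal (mkCpx 0 1) d) ->
  ip a b = ip c d.
Proof.
  unfold rp. rewrite !ip_scal_r. intros H1 H2. destruct (ip a b), (ip c d); simpl in *.
  apply Cpx_ext; simpl; lra.
Qed.

Lemma conv_ip_lim s (a : X) y (c : Cpx) : conv s a -> (forall n, ip (s n) y = c) -> ip a y = c.
Proof.
  intros H Hc. apply Cpx_ext.
  - apply (conv_r_lim y H). intro n. unfold rp. rewrite Hc. reflexivity.
  - assert (E : forall z, Im (ip z y) = rp z (hscal (mkCpx 0 1) y)).
    { intro z. unfold rp. rewrite ip_scal_r. simpl. ring. }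
    rewrite E. apply (conv_r_lim _ H). intro n. rewrite <- E, Hc. reflexivity.
Qed.

Definition closedX (M : X -> Prop) := forall s l, (forall n, M (s n)) -> conv s l -> M l.
Definition linX (M : X -> Prop) := M hzero /\ (forall x y, M x -> M y -> M (hadd x y)) /\
  (forall a x, M x -> M (hscal a x)).

Lemma hnorm_lt_sq (a : X) (b : R) : 0 < b -> Nq a < b * b -> hnorm a < b.
Proof. intros. rewrite hnorm_N, <- (sqrt_square b) by lra. apply sqrt_lt_1_alt. split; [apply N_nonneg|lra]. Qed.

Lemma sqrt_le_self1 (z : R) : 0 <= z -> sqrt z <= z + 1.
Proof.
  intro. rewrite <- (sqrt_square (z+1)) by lra. apply sqrt_le_1_alt. nra.
Qed.

Lemma hsub_hsub (x a b : X) : hsub (hsub x a) (hsub x b) = hsub b a.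
Proof.
  unfold hsub. rewrite hopp_hadd, hopp_opp, hadd_perm4, hadd_opp, hadd_0l, hadd_comm. reflexivity.
Qed.

Lemma parallelogram (p q : X) : Nq (hadd p q) + Nq (hsub p q) = 2 * Nq p + 2 * Nq q.
Proof.
  unfold hsub. rewrite <- hscal_m1. unfold Cm1. rewrite N_add, N_lin. ring.
Qed.

Lemma half_twice x : hscal (mkCpx (1/2) 0) (hadd x x) = x.
Proof.
  rewrite hscal_distr_l, <- hscal_distr_r. rewrite <- (hscal_1 _ x) at 2. f_equal. apply Cpx_ext; simpl; field.
Qed.

Lemma projection (M : X -> Prop) : linX M -> closedX M -> forall x, exists m, M m /\
  forall y, M y -> ip (hsub x m) y = C0.
Proof.
  intros [M0 [Madd Mscal]] Mcl x.
  set (E := fun (z : R) => exists m, M m /\ z = - Nq (hsub x m)).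
  assert (HB : bound E). { exists 0. intros z [m [_ ->]]. pose proof (N_nonneg (hsub x m)). lra. }
  assert (HE : exists zz : R, E zz). { exists (- Nq (hsub x hzero)). exists hzero. auto. }
  destruct (completeness E HB HE) as [sup [Hub Hlub]].
  set (d := - sup).
  assert (Hd1 : forall m, M m -> d <= Nq (hsub x m)).
  { intros m Hm. assert (E (- Nq (hsub x m))) by (exists m; auto). apply Hub in H. unfold d. lra. }
  assert (Hd2 : forall e, 0 < e -> exists m, M m /\ Nq (hsub x m) < d + e).
  { intros e He. apply NNPP. intro Hn.
    assert (is_upper_bound E (sup - e)).
    { intros z [m [Hm ->]]. apply Rnot_lt_le. intro. apply Hn. exists m. split; auto. unfold d; lra. }
    apply Hlub in H. lra. }
  assert (Hseq : forall n : nat, exists m, M m /\ Nq (hsub x m) < d + / (INR n + 1)).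
  { intro n. apply Hd2. apply Rinv_0_lt_compat. pose proof (pos_INR n). lra. }
  apply choice_fun in Hseq. destruct Hseq as [ms Hms].
  assert (Hcau : cauchy ms).
  { intros eps He. destruct (@inv_small (eps * eps / 4)) as [K HK]; [nra|].
    exists K. intros n k Hn Hk.
    apply hnorm_lt_sq; [lra|].
    destruct (Hms n) as [Mn Hn']. destruct (Hms k) as [Mk Hk'].
    pose proof (parallelogram (hsub x (ms k)) (hsub x (ms n))) as Hp.
    rewrite hsub_hsub in Hp.
    set (mid := hscal (mkCpx (1/2) 0) (hadd (ms k) (ms n))).
    assert (Mmid : M mid) by (apply Mscal, Madd; auto).
    assert (Hmid : hadd (hsub x (ms k)) (hsub x (ms n)) = hscal (mkCpx 2 0) (hsub x mid)).
    { unfold mid. rewrite <- hsub_scal, hscal_assoc.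
      assert (E2 : Cmul (mkCpx 2 0) (mkCpx (1/2) 0) = Defs.C1) by (apply Cpx_ext; simpl; field).
      rewrite E2, hscal_1, <- hsub_add. f_equal. rewrite <- (hscal_1 _ x) at 1 2.
      rewrite <- hscal_distr_r. f_equal. apply Cpx_ext; simpl; field. }
    rewrite Hmid, N_scal in Hp. simpl in Hp. specialize (Hd1 mid Mmid).
    pose proof (HK n Hn). pose proof (HK k Hk). lra. }
  destruct (cauchy_conv Hcau) as [m Hm].
  assert (Mm : M m) by (apply (Mcl ms m); [intro n; apply Hms | exact Hm]).
  assert (d0 : 0 <= d).
  { assert (sup <= 0); [|unfold d; lra]. apply Hlub. intros z [m' [_ ->]].
    pose proof (N_nonneg (hsub x m')). lra. }
  assert (Hle : Nq (hsub x m) <= d).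
  { apply small_le with (K := 2 * d + 6); [lra|]. intros del Hdel.
    destruct (Hm del) as [K1 HK1]; [lra|]. destruct (@inv_small del) as [K2 HK2]; [lra|].
    set (n := (K1 + K2)%nat). specialize (HK1 n ltac:(unfold n; lia)). specialize (HK2 n ltac:(unfold n; lia)).
    destruct (Hms n) as [_ Hn].
    assert (H1 : hnorm (hsub x (ms n)) <= sqrt (d + del)).
    { rewrite hnorm_N. apply sqrt_le_1_alt. lra. }
    pose proof (hnorm_sub_tri x (ms n) m) as H2.
    pose proof (@sqrt_le_self1 (d + del) ltac:(lra)) as H3.
    pose proof (sqrt_pos (d + del)) as H4.
    pose proof (hnorm_nonneg (hsub x m)) as H5.
    assert (H6 : hnorm (hsub x m) <= sqrt (d + del) + del) by lra.
    rewrite <- hnorm_sq.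
    assert (H7 : hnorm (hsub x m) * hnorm (hsub x m) <= (sqrt (d + del) + del) * (sqrt (d + del) + del))
      by (apply Rmult_le_compat; lra).
    assert (H8 : sqrt (d + del) * sqrt (d + del) = d + del) by (apply sqrt_sqrt; lra).
    nra. }
  assert (Horth : forall y, M y -> rp (hsub x m) y = 0).
  { intros y My. set (z := hsub x m).
    assert (Ht : forall t : R, 0 <= t * t * Nq y - 2 * t * rp z y).
    { intro t. assert (My' : M (hadd m (hscal (mkCpx t 0) y))) by (apply Madd; auto).
      apply Hd1 in My'.
      assert (Eq : hsub x (hadd m (hscal (mkCpx t 0) y)) = hadd z (hscal (mkCpx (-t) 0) y)).
      { unfold z, hsub. rewrite hopp_hadd, <- (hscal_m1 (hscal _ y)), hscal_assoc, hadd_assoc.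
        do 3 f_equal. apply Cpx_ext; simpl; ring. }
      rewrite Eq, N_lin in My'. assert (Hz : Nq z <= d) by exact Hle. nra. }
    pose proof (N_nonneg y). specialize (Ht (rp z y / (Nq y + 1))).
    set (q := rp z y / (Nq y + 1)) in *.
    assert (Eq : rp z y = q * (Nq y + 1)) by (unfold q; field; lra).
    rewrite Eq in Ht. rewrite Eq.
    assert (0 <= - (q * q) * (Nq y + 2)) by nra.
    assert (q * q <= 0) by nra. assert (q = 0) by nra. subst. nra. }
  exists m. split; auto. intros y My. apply Cpx_ext.
  - apply Horth; auto.
  - assert (E5 : Im (ip (hsub x m) y) = rp (hsub x m) (hscal (mkCpx 0 1) y)).
    { unfold rp. rewrite ip_scal_r. simpl. ring. }
    rewrite E5. apply Horth. apply Mscal; auto.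
Qed.

End H2.

Section H3.
Context {X : HilbertSpace}.
Implicit Types x y z f g u v m : X.
Implicit Types T : X * X -> Prop.
Implicit Types p q : X * X.

Lemma hsub_eq0 x y : hsub x y = hzero -> x = y.
Proof. intro H. rewrite <- (hsub_add_cancel x y), H, hadd_0l. reflexivity. Qed.

Lemma hsub_sub_self (x m : X) : hsub x (hsub x m) = m.
Proof. unfold hsub. rewrite hopp_hadd, hopp_opp, hadd_assoc, hadd_opp, hadd_0l. reflexivity. Qed.

Lemma Cadd_C0_l c : Cadd C0 c = c.
Proof. destruct c; apply Cpx_ext; simpl; ring. Qed.

Lemma norm2_ge_l (a b : X) : hnorm a <= norm2 (a, b).
Proof.
  unfold norm2, ip2; simpl. rewrite hnorm_N. apply sqrt_le_1_alt. unfold Nq.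
  pose proof (N_nonneg b). unfold Nq in H. lra.
Qed.

Lemma norm2_ge_r (a b : X) : hnorm b <= norm2 (a, b).
Proof.
  unfold norm2, ip2; simpl. rewrite hnorm_N. apply sqrt_le_1_alt. unfold Nq.
  pose proof (N_nonneg a). unfold Nq in H. lra.
Qed.

Lemma norm2_le (a b : X) : norm2 (a, b) <= hnorm a + hnorm b.
Proof.
  unfold norm2, ip2; simpl.
  pose proof (hnorm_nonneg a). pose proof (hnorm_nonneg b).
  rewrite <- (sqrt_square (hnorm a + hnorm b)) by lra. apply sqrt_le_1_alt.
  pose proof (hnorm_sq a). pose proof (hnorm_sq b). unfold Nq in *. nra.
Qed.

Definition pconv (u : nat -> X * X) (l : X * X) := forall eps, eps > 0 -> exists N, forall n, (n >= N)%nat ->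
        norm2 (hsub (fst (u n)) (fst l), hsub (snd (u n)) (snd l)) < eps.

Lemma pconv_split (u : nat -> X * X) l : pconv u l -> conv (fun n => fst (u n)) (fst l) /\ conv (fun n => snd (u n)) (snd l).
Proof.
  intro H. split; intros eps He; destruct (H eps He) as [K HK]; exists K; intros n Hn; specialize (HK n Hn).
  - pose proof (norm2_ge_l (hsub (fst (u n)) (fst l)) (hsub (snd (u n)) (snd l))). lra.
  - pose proof (norm2_ge_r (hsub (fst (u n)) (fst l)) (hsub (snd (u n)) (snd l))). lra.
Qed.

Lemma pconv_join (u : nat -> X * X) l : conv (fun n => fst (u n)) (fst l) -> conv (fun n => snd (u n)) (snd l) -> pconv u l.
Proof.
  intros H1 H2 eps He. destruct (H1 (eps/2)) as [K1 HK1]; [lra|]. destruct (H2 (eps/2)) as [K2 HK2]; [lra|].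
  exists (K1+K2)%nat. intros n Hn. specialize (HK1 n ltac:(lia)). specialize (HK2 n ltac:(lia)).
  pose proof (norm2_le (hsub (fst (u n)) (fst l)) (hsub (snd (u n)) (snd l))). lra.
Qed.

Lemma conv_r_eq s t (a b x f : X) : conv s a -> conv t b -> (forall n, rp (s n) x = rp (t n) f) ->
  rp a x = rp b f.
Proof.
  intros Hs Ht Heq.
  assert (forall d, 0 < d <= 1 -> Rabs (rp a x - rp b f) <= 0 + (hnorm x + hnorm f) * d).
  { intros d Hd. destruct (Hs d) as [K1 HK1]; [lra|]. destruct (Ht d) as [K2 HK2]; [lra|].
    set (n := (K1+K2)%nat). specialize (HK1 n ltac:(unfold n; lia)). specialize (HK2 n ltac:(unfold n; lia)).
    pose proof (CS (hsub (s n) a) x). pose proof (CS (hsub (t n) b) f).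
    rewrite r_sub_l in H, H0. specialize (Heq n).
    pose proof (hnorm_nonneg x). pose proof (hnorm_nonneg f).
    pose proof (hnorm_nonneg (hsub (s n) a)). pose proof (hnorm_nonneg (hsub (t n) b)).
    assert (hnorm (hsub (s n) a) * hnorm x <= d * hnorm x) by (apply Rmult_le_compat_r; lra).
    assert (hnorm (hsub (t n) b) * hnorm f <= d * hnorm f) by (apply Rmult_le_compat_r; lra).
    revert H H0. unfold Rabs. repeat destruct Rcase_abs; intros; lra. }
  pose proof (hnorm_nonneg x). pose proof (hnorm_nonneg f).
  destruct (Req_dec (hnorm x + hnorm f) 0) as [E|E].
  - specialize (H 1 ltac:(lra)). rewrite E in H. pose proof (Rabs_pos (rp a x - rp b f)).
    assert (HZ : Rabs (rp a x - rp b f) = 0) by lra. revert HZ; unfold Rabs; destruct Rcase_abs; intros; lra.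
  - apply small_le in H; [|lra]. pose proof (Rabs_pos (rp a x - rp b f)).
    assert (HZ : Rabs (rp a x - rp b f) = 0) by lra. revert HZ; unfold Rabs; destruct Rcase_abs; intros; lra.
Qed.

Lemma Im_as_r (a b : X) : Im (ip a b) = rp a (hscal (mkCpx 0 1) b).
Proof. unfold rp. rewrite ip_scal_r. simpl. ring. Qed.

Lemma conv_ip_eq s t (a b x f : X) : conv s a -> conv t b -> (forall n, ip (s n) x = ip (t n) f) ->
  ip a x = ip b f.
Proof.
  intros Hs Ht Heq. apply Cpx_ext.
  - eapply conv_r_eq; [exact Hs | exact Ht | ]. intro n. unfold rp. rewrite Heq. reflexivity.
  - rewrite !Im_as_r. eapply conv_r_eq; [exact Hs | exact Ht | ]. intro n. rewrite <- !Im_as_r, Heq. reflexivity.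
Qed.

Lemma adjoint_closed (T : X * X -> Prop) : is_closed2 (adjoint T).
Proof.
  intros u l Hu Hc. apply pconv_split in Hc. destruct Hc as [H1 H2].
  intros p Hp. eapply conv_ip_eq; [exact H2 | exact H1 | ]. intro n. apply (Hu n p Hp).
Qed.

Lemma sa_closed (T : X * X -> Prop) : self_adjoint T -> is_closed2 T.
Proof.
  intros H u l Hu Hc. apply H. apply (@adjoint_closed T u l); [|exact Hc]. intro n. apply H, Hu.
Qed.

Definition zsec (T : X * X -> Prop) : X -> Prop := fun g => T (hzero, g).

Lemma zsec_lin T : is_linear_subspace T -> linX (zsec T).
Proof.
  intros [T0 [Tadd Tscal]]. unfold zsec. split; [exact T0|split].
  - intros x y Hx Hy. pose proof (Tadd _ _ Hx Hy). simpl in H. rewrite hadd_0 in H. exact H.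
  - intros a x Hx. pose proof (Tscal a _ Hx). simpl in H. rewrite hscal_zero in H. exact H.
Qed.

Lemma zsec_closed T : is_closed2 T -> closedX (zsec T).
Proof.
  intros Tc s l Hs Hc. unfold zsec. apply (Tc (fun n => (hzero, s n)) (hzero, l)); [exact Hs|].
  apply pconv_join; simpl; [apply conv_const | exact Hc].
Qed.

Lemma lin_sub T p q : is_linear_subspace T -> T p -> T q -> T (hsub (fst p) (fst q), hsub (snd p) (snd q)).
Proof.
  intros [T0 [Tadd Tscal]] Hp Hq. pose proof (Tadd _ _ Hp (Tscal Cm1 _ Hq)). simpl in H.
  rewrite !hscal_m1 in H. exact H.
Qed.

Lemma Ts_exists T x f : is_linear_subspace T -> is_closed2 T -> T (x, f) ->
  exists u, T_s T (x, u) /\ T (hzero, hsub f u).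
Proof.
  intros Tl Tc Hf. destruct (projection (zsec_lin Tl) (zsec_closed Tc) f) as [m [Hm Hort]].
  exists (hsub f m). rewrite hsub_sub_self. split; [|exact Hm].
  split.
  - pose proof (@lin_sub T (x, f) (hzero, m) Tl Hf Hm). simpl in H. rewrite hsub_0 in H. exact H.
  - intros [q1 q2] [Hq1 Hq2]. simpl in Hq1. subst q1. unfold ip2; simpl.
    rewrite ip_zero_r, Cadd_C0_l. apply Hort. exact Hq2.
Qed.

Lemma Ts_in T p : T_s T p -> T p.
Proof. intros [H _]; exact H. Qed.

Lemma Ts_orth T x u g : T_s T (x, u) -> T (hzero, g) -> ip u g = C0.
Proof.
  intros [_ H] Hg. specialize (H (hzero, g) (conj eq_refl Hg)). unfold ip2 in H; simpl in H.
  rewrite ip_zero_r, Cadd_C0_l in H. exact H.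
Qed.

Lemma Ts_unique T x u v : is_linear_subspace T -> T_s T (x, u) -> T_s T (x, v) -> u = v.
Proof.
  intros Tl Hu Hv. pose proof (@lin_sub T (x, u) (x, v) Tl (Ts_in Hu) (Ts_in Hv)) as H. simpl in H. rewrite hsub_diag in H.
  pose proof (@Ts_orth T x u (hsub u v) Hu H). pose proof (@Ts_orth T x v (hsub u v) Hv H).
  apply hsub_eq0, ip_def. rewrite ip_sub_l, H0, H1. apply Cpx_ext; simpl; ring.
Qed.

Lemma Ts_lin T : is_linear_subspace T -> is_linear_subspace (T_s T).
Proof.
  intros Tl. pose proof Tl as [T0 [Tadd Tscal]]. split; [|split].
  - split; [exact T0|]. intros q _. unfold ip2; simpl. rewrite !ip_zero_l. apply Cpx_ext; simpl; ring.
  - intros p q [Hp Op] [Hq Oq]. split; [apply Tadd; auto|]. intros w Hw. specialize (Op w Hw). specialize (Oq w Hw).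
    unfold ip2 in *; simpl in *. rewrite !ip_add_l.
    destruct (ip (fst p) (fst w)), (ip (snd p) (snd w)), (ip (fst q) (fst w)), (ip (snd q) (snd w)).
    unfold C0 in *. injection Op; injection Oq; intros. apply Cpx_ext; simpl; lra.
  - intros a p [Hp Op]. split; [apply Tscal; auto|]. intros w Hw. specialize (Op w Hw).
    unfold ip2 in *; simpl in *. rewrite !ip_scal_l.
    destruct (ip (fst p) (fst w)), (ip (snd p) (snd w)), a.
    unfold C0 in *. injection Op; intros. simpl in *. subst. apply Cpx_ext; simpl; nra.
Qed.

End H3.

Section H4.
Context {X : HilbertSpace}.
Implicit Types x y z f g u v m w h k : X.
Implicit Types T S A : X * X -> Prop.
Implicit Types p q : X * X.

Lemma hsub_sub4 (a b c d : X) : hsub (hsub a b) (hsub c d) = hsub (hsub a c) (hsub b d).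
Proof. unfold hsub. rewrite !hopp_hadd, !hopp_opp, hadd_perm4. reflexivity. Qed.

Lemma hsub_add_l (a b c : X) : hsub (hadd a b) c = hadd (hsub a c) b.
Proof. unfold hsub. rewrite <- !hadd_assoc, (hadd_comm _ b). reflexivity. Qed.

Lemma sum_lin S A : is_linear_subspace S -> is_linear_subspace A -> is_linear_subspace (rel_sum S A).
Proof.
  intros [S0 [Sa Ss]] [A0 [Aa As]]. split; [|split].
  - exists hzero, hzero. simpl. rewrite hadd_0. auto.
  - intros [x1 k1] [x2 k2] [f1 [g1 [H1 [H2 ->]]]] [f2 [g2 [H3 [H4 ->]]]]. simpl in *.
    exists (hadd f1 f2), (hadd g1 g2). simpl. split; [apply (Sa _ _ H1 H3)|split; [apply (Aa _ _ H2 H4)|]].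
    apply hadd_perm4.
  - intros a [x k] [f [g [H1 [H2 ->]]]]. simpl in *. exists (hscal a f), (hscal a g). simpl.
    split; [apply (Ss a _ H1)|split; [apply (As a _ H2)|]]. apply hscal_distr_l.
Qed.

Lemma sum_herm S A : self_adjoint S -> hermitian A -> hermitian (rel_sum S A).
Proof.
  intros HS HA [y k] [f' [g' [H1 [H2 E]]]] [x k'] [f [g [H3 [H4 E']]]]. simpl in *. subst.
  rewrite ip_add_l, ip_add_r.
  pose proof (proj1 (HS _) H1 (x, f) H3) as e1. pose proof (HA _ H2 (x, g) H4) as e2. simpl in *.
  rewrite e1, e2. reflexivity.
Qed.

Definition ci (s : R) := mkCpx 0 s.

Lemma herm_real S x f : self_adjoint S -> S (x, f) -> Im (ip f x) = 0.
Proof.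
  intros HS H. pose proof (proj1 (HS _) H (x, f) H) as e. simpl in e.
  rewrite (ip_conj _ x f) in e |- *. destruct (ip x f) as [a b]. unfold Cconj in *; simpl in *. injection e. lra.
Qed.

Lemma key_id S x f (s : R) : self_adjoint S -> S (x, f) ->
  Nq (hsub f (hscal (ci s) x)) = Nq f + s * s * Nq x.
Proof.
  intros HS H. pose proof (@herm_real S x f HS H) as e.
  assert (e' : Im (ip x f) = 0) by (rewrite (ip_conj _ f x); simpl; lra).
  assert (e'' : Re (ip x f) = Re (ip f x)) by (rewrite (ip_conj _ f x); simpl; lra).
  unfold Nq.
  rewrite ip_sub_l, !ip_sub_r, !ip_scal_l, !ip_scal_r.
  pose proof (Im_ip_self x). unfold ci. simpl. rewrite e, e', e'', H0. ring.
Qed.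

Lemma conv_cauchy (s : nat -> X) l : conv s l -> cauchy s.
Proof.
  intros H eps He. destruct (H (eps/2)) as [K HK]; [lra|]. exists K. intros n m Hn Hm.
  pose proof (hnorm_sub_tri (s n) l (s m)). rewrite (hnorm_sub_sym l) in H0.
  pose proof (HK n Hn). pose proof (HK m Hm). lra.
Qed.

Lemma range_S S (s : R) : is_linear_subspace S -> self_adjoint S -> s <> 0 ->
  forall w, exists x f, S (x, f) /\ hsub f (hscal (ci s) x) = w.
Proof.
  intros Sl HS Hs w.
  pose proof Sl as [S0 [Sa Ss]].
  set (M := fun w => exists x f, S (x, f) /\ w = hsub f (hscal (ci s) x)).
  assert (Ml : linX M).
  { split; [|split].
    - exists hzero, hzero. split; auto. rewrite hscal_zero, hsub_diag. reflexivity.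
    - intros w1 w2 [x1 [f1 [H1 ->]]] [x2 [f2 [H2 ->]]]. exists (hadd x1 x2), (hadd f1 f2).
      split; [apply (Sa _ _ H1 H2)|]. rewrite hscal_distr_l, hsub_add. reflexivity.
    - intros a w1 [x1 [f1 [H1 ->]]]. exists (hscal a x1), (hscal a f1). split; [apply (Ss a _ H1)|].
      rewrite <- hsub_scal, !hscal_assoc. f_equal. f_equal. unfold ci; destruct a; apply Cpx_ext; simpl; ring. }
  assert (Mc : closedX M).
  { intros sq l Hsq Hc.
    apply choice_fun in Hsq. destruct Hsq as [xs Hxs]. apply choice_fun in Hxs. destruct Hxs as [fs Hfs].
    assert (Hd : forall i j, Nq (hsub (sq i) (sq j)) = Nq (hsub (fs i) (fs j)) + s * s * Nq (hsub (xs i) (xs j))).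
    { intros i j. destruct (Hfs i) as [Hi Ei]. destruct (Hfs j) as [Hj Ej]. rewrite Ei, Ej.
      pose proof (@lin_sub _ S (xs i, fs i) (xs j, fs j) Sl Hi Hj) as Hl. simpl in Hl.
      rewrite <- (@key_id S _ _ s HS Hl). f_equal. rewrite <- hsub_scal, hsub_sub4. reflexivity. }
    assert (Cq : cauchy sq) by (apply conv_cauchy with l; exact Hc).
    assert (Cf : cauchy fs).
    { intros eps He. destruct (Cq eps He) as [K HK]. exists K. intros i j Hi Hj. specialize (HK i j Hi Hj).
      assert (hnorm (hsub (fs i) (fs j)) <= hnorm (hsub (sq i) (sq j))); [|lra].
      rewrite !hnorm_N. apply sqrt_le_1_alt. rewrite Hd. pose proof (N_nonneg (hsub (xs i) (xs j))). nra. }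
    assert (Cx : cauchy xs).
    { intros eps He. assert (Hs2 : 0 < Rabs s) by (apply Rabs_pos_lt; auto).
      destruct (Cq (eps * Rabs s)) as [K HK]; [nra|]. exists K. intros i j Hi Hj. specialize (HK i j Hi Hj).
      assert (Rabs s * hnorm (hsub (xs i) (xs j)) <= hnorm (hsub (sq i) (sq j))).
      { rewrite !hnorm_N. rewrite <- (sqrt_Rsqr_abs s), <- sqrt_mult by (try apply Rle_0_sqr; apply N_nonneg).
        apply sqrt_le_1_alt. rewrite Hd. unfold Rsqr. pose proof (N_nonneg (hsub (fs i) (fs j))). nra. }
      apply (Rmult_lt_reg_l (Rabs s)); [lra|]. lra. }
    destruct (cauchy_conv Cf) as [f Hf]. destruct (cauchy_conv Cx) as [x Hx].
    assert (HSx : S (x, f)).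
    { apply (sa_closed HS (fun n => (xs n, fs n)) (x, f)); [intro n; apply Hfs|].
      apply pconv_join; simpl; auto. }
    exists x, f. split; auto.
    apply (conv_unique Hc). 
    assert (E : sq = fun n => hsub (fs n) (hscal (ci s) (xs n))).
    { apply functional_extensionality_dep. intro n. apply Hfs. }
    rewrite E. apply conv_sub; auto. apply conv_scal; auto. }
  destruct (projection Ml Mc w) as [m [[x [f [Hxf Em]]] Hort]].
  set (zz := hsub w m).
  assert (Hz : forall x' f', S (x', f') -> ip zz f' = Cmul (Cconj (ci s)) (ip zz x')).
  { intros x' f' H'. assert (My : M (hsub f' (hscal (ci s) x'))) by (exists x', f'; auto).
    specialize (Hort _ My). fold zz in Hort. rewrite ip_sub_r, ip_scal_r in Hort.
    destruct (ip zz f'), (ip zz x'). unfold C0 in Hort. injection Hort. intros.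
    apply Cpx_ext; simpl in *; lra. }
  assert (HSz : S (zz, hscal (Cconj (ci s)) zz)).
  { apply HS. intros [x' f'] H'. simpl. rewrite ip_scal_l, (Hz _ _ H'). reflexivity. }
  pose proof (@herm_real S _ _ HS HSz) as e. rewrite ip_scal_l in e.
  pose proof (Im_ip_self zz). unfold ci in e. simpl in e.
  assert (Nq zz = 0). { unfold Nq. destruct (ip zz zz); simpl in *. subst. nra. }
  apply N_zero in H0. unfold zz in H0. apply hsub_eq0 in H0. subst.
  exists x, f. auto.
Qed.

End H4.

Section H5.
Context {X : HilbertSpace}.
Implicit Types x y z f g u v m w h k : X.
Implicit Types T S A : X * X -> Prop.

Lemma phi_ge (phi : nat -> nat) : (forall n, (phi n < phi (S n))%nat) -> forall n, (n <= phi n)%nat.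
Proof. intros Hp n. induction n; [lia|]. specialize (Hp n). lia. Qed.

Lemma RB S A : is_linear_subspace S -> is_linear_subspace A -> is_closed2 A ->
  rel_compact (T_s A) (T_s S) ->
  forall eps, eps > 0 -> exists C, 0 <= C /\ forall x v u, T_s S (x, v) -> T_s A (x, u) ->
    hnorm u <= eps * hnorm v + C * hnorm x.
Proof.
  intros Sl Al Ac Hcomp eps He. apply NNPP; intro Hn.
  assert (Hw : forall n : nat, exists t : X * X * X,
    T_s S (fst (fst t), snd (fst t)) /\ T_s A (fst (fst t), snd t) /\
    eps * hnorm (snd (fst t)) + (INR n + 1) * hnorm (fst (fst t)) < hnorm (snd t)).
  { intro n. apply NNPP; intro Hm. apply Hn. exists (INR n + 1). split; [pose proof (pos_INR n); lra|].
    intros x v u H1 H2. apply Rnot_lt_le. intro Hlt. apply Hm. exists ((x, v), u). simpl; auto. }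
  apply choice_fun in Hw. destruct Hw as [tr Htr].
  set (xs := fun n => fst (fst (tr n))). set (vs := fun n => snd (fst (tr n))). set (us := fun n => snd (tr n)).
  assert (Hpos : forall n, 0 < hnorm (us n)).
  { intro n. destruct (Htr n) as [_ [_ H]]. pose proof (hnorm_nonneg (snd (fst (tr n)))).
    pose proof (hnorm_nonneg (fst (fst (tr n)))). pose proof (pos_INR n). unfold us.
    assert (0 <= (INR n + 1) * hnorm (fst (fst (tr n)))) by (apply Rmult_le_pos; lra). nra. }
  set (kk := fun n => mkCpx (/ hnorm (us n)) 0).
  set (xs' := fun n => hscal (kk n) (xs n)).
  set (vs' := fun n => hscal (kk n) (vs n)).
  set (us' := fun n => hscal (kk n) (us n)).
  pose proof (Ts_lin Sl) as [_ [_ SsS]]. pose proof (Ts_lin Al) as [_ [_ SsA]].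
  assert (HS' : forall n, T_s S (xs' n, vs' n)).
  { intro n. apply (SsS (kk n) (xs n, vs n)). apply Htr. }
  assert (HA' : forall n, T_s A (xs' n, us' n)).
  { intro n. apply (SsA (kk n) (xs n, us n)). apply Htr. }
  assert (Hk : forall n (z : X), hnorm (hscal (kk n) z) = / hnorm (us n) * hnorm z).
  { intros n z. unfold kk. rewrite hnorm_scalR. rewrite Rabs_pos_eq; [reflexivity|].
    left; apply Rinv_0_lt_compat; auto. }
  assert (Hu1 : forall n, hnorm (us' n) = 1).
  { intro n. unfold us'. rewrite Hk. field. specialize (Hpos n). lra. }
  assert (Hineq : forall n, eps * hnorm (vs' n) + (INR n + 1) * hnorm (xs' n) < 1).
  { intro n. unfold vs', xs'. rewrite !Hk. destruct (Htr n) as [_ [_ H]]. specialize (Hpos n).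
    fold (xs n) (vs n) (us n) in H.
    apply (Rmult_lt_compat_l (/ hnorm (us n))) in H; [|apply Rinv_0_lt_compat; auto].
    rewrite Rinv_l in H by lra. nra. }
  assert (Hx' : forall n, hnorm (xs' n) < / (INR n + 1)).
  { intro n. specialize (Hineq n). pose proof (hnorm_nonneg (vs' n)). pose proof (pos_INR n).
    apply (Rmult_lt_reg_l (INR n + 1)); [lra|]. rewrite Rinv_r by lra. nra. }
  assert (Hbd : forall n, hnorm (xs' n) + hnorm (vs' n) <= 1 + / eps).
  { intro n. specialize (Hineq n). specialize (Hx' n). pose proof (pos_INR n).
    pose proof (hnorm_nonneg (vs' n)). pose proof (hnorm_nonneg (xs' n)).
    assert (/ (INR n + 1) <= 1).
    { rewrite <- Rinv_1. apply Rinv_le_contravar; lra. }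
    assert (hnorm (vs' n) <= / eps).
    { apply (Rmult_le_reg_l eps); [lra|]. rewrite Rinv_r by lra. nra. }
    lra. }
  destruct (Hcomp xs' vs' us' (1 + / eps) HS' HA' Hbd) as [phi [y [Hphi Hy]]].
  assert (Hyc : conv (fun n => us' (phi n)) y) by exact Hy.
  assert (Hx0 : conv (fun n => xs' (phi n)) hzero).
  { intros e Hee. destruct (@inv_small e) as [K HK]; [lra|]. exists K. intros n Hnn.
    rewrite hsub_0. pose proof (phi_ge phi Hphi n). specialize (HK (phi n) ltac:(lia)).
    specialize (Hx' (phi n)). lra. }
  assert (HAy : A (hzero, y)).
  { apply (Ac (fun n => (xs' (phi n), us' (phi n))) (hzero, y)).
    - intro n. apply Ts_in, HA'.
    - apply pconv_join; simpl; auto. }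
  assert (Hyy : ip y y = C0).
  { apply (conv_ip_lim y Hyc). intro n. apply (@Ts_orth _ A (xs' (phi n)) (us' (phi n)) y); auto. }
  apply ip_def in Hyy. subst y.
  destruct (Hyc (1/2)) as [K HK]; [lra|]. specialize (HK K (le_n _)). rewrite hsub_0, Hu1 in HK. lra.
Qed.

End H5.

Fixpoint iterq {X : HilbertSpace} (h : X) (B : X -> X) (n : nat) : X :=
  match n with O => hzero | Datatypes.S n' => hsub h (B (iterq h B n')) end.

Section H6.
Context {X : HilbertSpace}.
Implicit Types x y z f g u v m w h k : X.
Implicit Types T S A : X * X -> Prop.

Lemma fixed_point (B : X -> X) : (forall w1 w2, hnorm (hsub (B w1) (B w2)) <= / 2 * hnorm (hsub w1 w2)) ->
  forall h, exists w, w = hsub h (B w).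
Proof.
  intros HB h. set (ws := iterq h B).
  set (D0 := hnorm (hsub (ws 1%nat) (ws 0%nat))).
  assert (HD : forall n, hnorm (hsub (ws (Datatypes.S n)) (ws n)) <= D0 * (/2) ^ n).
  { induction n.
    - simpl. unfold D0. lra.
    - change (ws (Datatypes.S (Datatypes.S n))) with (hsub h (B (ws (Datatypes.S n)))).
      change (ws (Datatypes.S n)) with (hsub h (B (ws n))) at 2.
      rewrite hsub_hsub. pose proof (HB (ws n) (ws (Datatypes.S n))).
      rewrite hnorm_sub_sym in IHn. simpl. nra. }
  assert (D0p : 0 <= D0) by apply hnorm_nonneg.
  assert (Hgap : forall (k : nat) (n : nat), hnorm (hsub (ws (n + k)%nat) (ws n)) <= 2 * D0 * ((/2) ^ n - (/2) ^ (n + k))).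
  { induction k; intro n.
    - rewrite Nat.add_0_r, hsub_diag, hnorm_of_zero. lra.
    - pose proof (hnorm_sub_tri (ws (n + Datatypes.S k)%nat) (ws (n + k)%nat) (ws n)).
      rewrite Nat.add_succ_r in *. pose proof (HD (n + k)%nat). specialize (IHk n).
      simpl ((/2) ^ Datatypes.S (n + k)). lra. }
  assert (Hc : cauchy ws).
  { intros eps He. destruct (pow_lt_1_zero (/2) ltac:(rewrite Rabs_pos_eq; lra) (eps / (2 * D0 + 1)))
      as [K HK]. { apply Rdiv_lt_0_compat; lra. }
    assert (Hgen : forall (n m : nat), (n >= K)%nat -> (m >= n)%nat -> hnorm (hsub (ws m) (ws n)) < eps).
    { intros n m Hn Hm. replace m with (n + (m - n))%nat by lia. pose proof (Hgap (m - n)%nat n).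
      specialize (HK n Hn). rewrite Rabs_pos_eq in HK by (apply pow_le; lra).
      pose proof (pow_le (/2) (n + (m - n)) ltac:(lra)).
      assert (2 * D0 * (/ 2) ^ n <= 2 * D0 * (eps / (2 * D0 + 1))) by (apply Rmult_le_compat_l; lra).
      assert (2 * D0 * (eps / (2 * D0 + 1)) < eps).
      { assert (Eq : eps / (2 * D0 + 1) * (2 * D0 + 1) = eps) by (field; lra).
        assert (0 < eps / (2 * D0 + 1)) by (apply Rdiv_lt_0_compat; lra). nra. }
      nra. }
    exists K. intros n m Hn Hm. destruct (Nat.le_ge_cases n m) as [Hl|Hl].
    - rewrite hnorm_sub_sym. apply Hgen; auto.
    - apply Hgen; auto. }
  destruct (cauchy_conv Hc) as [w Hw]. exists w.
  assert (HBc : conv (fun n => B (ws n)) (B w)).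
  { intros eps He. destruct (Hw eps He) as [K HK]. exists K. intros n Hn. specialize (HK n Hn).
    pose proof (HB (ws n) w). pose proof (hnorm_nonneg (hsub (ws n) w)). lra. }
  assert (H1 : conv (fun n => ws (Datatypes.S n)) (hsub h (B w))).
  { apply conv_sub; auto. apply conv_const. }
  assert (H2 : conv (fun n => ws (Datatypes.S n)) w).
  { intros eps He. destruct (Hw eps He) as [K HK]. exists K. intros n Hn. apply HK. lia. }
  exact (conv_unique H2 H1).
Qed.


Lemma hnorm_le_of_N x y : Nq x <= Nq y -> hnorm x <= hnorm y.
Proof. intro H. rewrite !hnorm_N. apply sqrt_le_1_alt. exact H. Qed.

Lemma N_hzero : Nq (@hzero X) = 0.
Proof. unfold Nq. rewrite ip_zero_l. reflexivity. Qed.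

Lemma surj S A (C s : R) : is_linear_subspace S -> self_adjoint S -> is_linear_subspace A -> is_closed2 A ->
  (forall x, dom S x -> dom A x) -> 0 <= C ->
  (forall x v u, T_s S (x, v) -> T_s A (x, u) -> hnorm u <= / 4 * hnorm v + C * hnorm x) ->
  Rabs s = 4 * C + 1 ->
  forall h, exists z k, rel_sum S A (z, k) /\ hsub k (hscal (ci s) z) = h.
Proof.
  intros Sl HS Al Ac Hdom HC Hrb Hs h.
  assert (s0 : s <> 0). { intro E. rewrite E, Rabs_R0 in Hs. lra. }
  assert (Hex : forall w, exists t : X * X * X, S (fst (fst t), snd (fst t)) /\ hsub (snd (fst t)) (hscal (ci s) (fst (fst t))) = w /\ T_s A (fst (fst t), snd t)).
  { intro w. destruct (@range_S X S s Sl HS s0 w) as [x [f [H1 H2]]].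
    destruct (Hdom x (ex_intro _ f H1)) as [g Hg].
    destruct (@Ts_exists X A x g Al Ac Hg) as [u [Hu _]]. exists ((x, f), u). simpl. auto. }
  apply choice_fun in Hex. destruct Hex as [F HF].
  set (B := fun w => snd (F w)).
  assert (Hbd : forall w, hnorm (B w) <= / 2 * hnorm w).
  { intro w. destruct (HF w) as [H1 [H2 H3]]. unfold B.
    set (x := fst (fst (F w))) in *. set (f := snd (fst (F w))) in *. set (u := snd (F w)) in *.
    destruct (@Ts_exists X S x f Sl (sa_closed HS) H1) as [v [Hv Hv0]].
    pose proof (@Ts_orth _ S x v (hsub f v) Hv Hv0) as Ho.
    assert (Ef : Nq f = Nq v + Nq (hsub f v)).
    { rewrite <- (hsub_add_cancel f v) at 1. rewrite hadd_comm, N_add. unfold rp. rewrite Ho. simpl. ring. }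
    assert (Ew : Nq w = Nq f + s * s * Nq x) by (rewrite <- H2; apply (@key_id X S x f s HS H1)).
    pose proof (N_nonneg (hsub f v)). pose proof (N_nonneg x).
    assert (Hv1 : hnorm v <= hnorm w) by (apply hnorm_le_of_N; nra).
    assert (Hx1 : Rabs s * hnorm x <= hnorm w).
    { rewrite !hnorm_N. rewrite <- (sqrt_Rsqr_abs s), <- sqrt_mult by (try apply Rle_0_sqr; apply N_nonneg).
      apply sqrt_le_1_alt. unfold Rsqr. pose proof (N_nonneg v). nra. }
    rewrite Hs in Hx1. specialize (Hrb x v u Hv H3). pose proof (hnorm_nonneg x). nra. }
  assert (Hlin : forall w1 w2, hsub (B w1) (B w2) = B (hsub w1 w2)).
  { intros w1 w2. destruct (HF w1) as [A1 [B1 C1']]. destruct (HF w2) as [A2 [B2 C2]].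
    destruct (HF (hsub w1 w2)) as [A3 [B3 C3]]. unfold B.
    set (x1 := fst (fst (F w1))) in *. set (f1 := snd (fst (F w1))) in *.
    set (x2 := fst (fst (F w2))) in *. set (f2 := snd (fst (F w2))) in *.
    set (x3 := fst (fst (F (hsub w1 w2)))) in *. set (f3 := snd (fst (F (hsub w1 w2)))) in *.
    pose proof (@lin_sub _ S (x1, f1) (x2, f2) Sl A1 A2) as L12. simpl in L12.
    pose proof (@lin_sub _ S (hsub x1 x2, hsub f1 f2) (x3, f3) Sl L12 A3) as L. simpl in L.
    pose proof (@key_id X S _ _ s HS L) as K.
    rewrite <- (hsub_scal (ci s) (hsub x1 x2) x3), <- (hsub_scal (ci s) x1 x2) in K.
    rewrite (hsub_sub4 (hsub f1 f2) f3), (hsub_sub4 f1 f2), B1, B2, B3, hsub_diag, N_hzero in K.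
    assert (Ex : hsub (hsub x1 x2) x3 = hzero).
    { apply N_zero. pose proof (N_nonneg (hsub (hsub f1 f2) f3)). pose proof (N_nonneg (hsub (hsub x1 x2) x3)).
      assert (0 < s * s) by (pose proof (Rsqr_pos_lt s s0); unfold Rsqr in *; lra). nra. }
    apply hsub_eq0 in Ex.
    pose proof (@lin_sub _ (T_s A) (x1, snd (F w1)) (x2, snd (F w2)) (Ts_lin Al) C1' C2) as LA. simpl in LA.
    rewrite Ex in LA. exact (Ts_unique Al LA C3). }
  assert (Hcon : forall w1 w2, hnorm (hsub (B w1) (B w2)) <= / 2 * hnorm (hsub w1 w2)).
  { intros. rewrite Hlin. apply Hbd. }
  destruct (@fixed_point B Hcon h) as [w Hw].
  destruct (HF w) as [H1 [H2 H3]].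
  exists (fst (fst (F w))), (hadd (snd (fst (F w))) (B w)). split.
  - exists (snd (fst (F w))), (B w). simpl. split; [exact H1|split; [apply (Ts_in H3)|reflexivity]].
  - rewrite hsub_add_l, H2. rewrite Hw at 1. apply hsub_add_cancel.
Qed.

End H6.

Unset Implicit Arguments.

Theorem theorem4p3 (X : HilbertSpace) (S A : X * X -> Prop) :
  is_linear_subspace S -> self_adjoint S ->
  is_linear_subspace A -> is_closed2 A -> hermitian A ->
  (forall x, dom S x -> dom A x) ->
  rel_compact (T_s A) (T_s S) ->
  is_linear_subspace (rel_sum S A) /\ self_adjoint (rel_sum S A).
Proof.
  intros Sl HS Al Ac HA Hdom Hcomp. split; [apply sum_lin; auto|].
  intros [y h]. split; [intro Hp; apply (sum_herm HS HA); exact Hp|]. intro Hadj.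
  destruct (RB Sl Al Ac Hcomp (eps := / 4) ltac:(lra)) as [C [HC Hrb]].
  set (t := 4 * C + 1).
  assert (Ht : Rabs t = 4 * C + 1) by (apply Rabs_pos_eq; unfold t; lra).
  assert (Ht' : Rabs (- t) = 4 * C + 1) by (rewrite Rabs_Ropp; exact Ht).
  destruct (@surj X S A C t Sl HS Al Ac Hdom HC Hrb Ht (hsub h (hscal (ci t) y))) as [z [k [Hzk Ek]]].
  set (d1 := hsub y z).
  assert (Ed2 : hsub h k = hscal (ci t) d1).
  { unfold d1. rewrite <- hsub_scal. apply hsub_eq0.
    rewrite <- hsub_sub4, Ek, hsub_diag. reflexivity. }
  assert (Hrel : forall x f, rel_sum S A (x, f) -> ip (hsub h k) x = ip d1 f).
  { intros x f Hxf. pose proof (Hadj (x, f) Hxf) as e1. pose proof (sum_herm HS HA Hzk Hxf) as e2.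
    simpl in e1, e2. unfold d1. rewrite !ip_sub_l, e1, e2. reflexivity. }
  destruct (@surj X S A C (- t) Sl HS Al Ac Hdom HC Hrb Ht' d1) as [x [f [Hxf Ef]]].
  specialize (Hrel x f Hxf). rewrite Ed2, ip_scal_l in Hrel.
  assert (Hd : ip d1 d1 = C0).
  { rewrite <- Ef at 2. rewrite ip_sub_r, ip_scal_r, <- Hrel. unfold ci. simpl.
    destruct (ip d1 x). apply Cpx_ext; simpl; ring. }
  apply ip_def in Hd. unfold d1 in Hd. apply hsub_eq0 in Hd.
  unfold d1 in Ed2. rewrite Hd, hsub_diag, hscal_zero in Ed2. apply hsub_eq0 in Ed2. subst. exact Hzk.
Qed.
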